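(* Let $m\geq1$ and $0\leq r_1<r_2\leq m$, and let $q=p^t$ be a power of an odd prime $p$, $t\geq1$. Then there exists an asymmetric quantum code with parameters $[[t2^m,\ t[k(r_2)-k(r_1)],\ d_z/d_x]]_p$, where $k(r)=\sum_{i=0}^{r}\binom{m}{i}$, $d_z\geq 2^{m-r_2}$ and $d_x\geq 2^{r_1+1}$.
   Context: An AQECC $[[n,k,d_z/d_x]]_p$ is a $p^k$-dimensional subspace of $\mathbb{C}^{p^n}$ correcting all qudit-flip errors up to $\lfloor (d_x-1)/2\rfloor$ and all phase-shift errors up to $\lfloor (d_z-1)/2\rfloor$. *)

(* Defs.v *)
From Stdlib Require Reals.
From HB Require Import structures.
From mathcomp Require Import all_boot all_order all_algebra.
From mathcomp Require Import complex.
From mathcomp Require Import Rstruct.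
Set Implicit Arguments. Unset Strict Implicit. Unset Printing Implicit Defensive.
Import GRing.Theory Num.Theory.
Local Open Scope ring_scope.

Definition Cx := complex Rdefinitions.R.

Definition omega (p : nat) : Cx :=
  Complex (Rtrigo_def.cos (2 * Rtrigo1.PI / p%:R))
          (Rtrigo_def.sin (2 * Rtrigo1.PI / p%:R)).

(* Computational basis of (C^p)^{\otimes n}: strings x in F_p^n. *)
Definition Basis (p n : nat) := {ffun 'I_n -> 'F_p}.

Definition Hspace (p n : nat) := {ffun Basis p n -> Cx^o}.

Definition wt (p n : nat) (a : Basis p n) : nat := #|[set i | a i != 0]|.

Definition inner (p n : nat) (u v : Hspace p n) : Cx :=
  \sum_(x : Basis p n) (u x)^* * v x.

(* Qudit-flip (shift) operator X(a): |x> |-> |x + a>. *)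
Definition Xop (p n : nat) (a : Basis p n) (v : Hspace p n) : Hspace p n :=
  [ffun x : Basis p n => v (x - a)].

Definition Zop (p n : nat) (b : Basis p n) (v : Hspace p n) : Hspace p n :=
  [ffun x : Basis p n => omega p ^+ (nat_of_ord (\sum_(i < n) b i * x i)) * v x].

Definition Eop (p n : nat) (a b : Basis p n) (v : Hspace p n) : Hspace p n :=
  Xop a (Zop b v).

(* Knill-Laflamme condition: Q corrects every error X(a)Z(b) with
   wt a <= tx (qudit-flip) and wt b <= tz (phase-shift). *)
Definition corrects (p n : nat) (Q : {vspace Hspace p n}) (tx tz : nat) : Prop :=
  forall a1 b1 a2 b2 : Basis p n,
    (wt a1 <= tx)%N -> (wt a2 <= tx)%N -> (wt b1 <= tz)%N -> (wt b2 <= tz)%N ->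
    exists c : Cx, forall u v : Hspace p n, u \in Q -> v \in Q ->
      inner (Eop a1 b1 u) (Eop a2 b2 v) = c * inner u v.

Definition AQECC (p n k dz dx : nat) (Q : {vspace Hspace p n}) : Prop :=
  \dim Q = (p ^ k)%N /\ corrects Q (dx.-1)./2 (dz.-1)./2.

Definition kRM (m r : nat) : nat := \sum_(0 <= i < r.+1) 'C(m, i).

(* Main.v *)
Require Import Defs.
From Stdlib Require Import Reals Lra.

Section StdR.
Local Open Scope R_scope.
Lemma cos_neq1 (x : R) : 0 < x < 2 * PI -> cos x <> 1.
Proof.
intros [H1 H2] E.
assert (Hs : 0 < sin (x/2)) by (apply sin_gt_0; lra).
replace x with (2 * (x/2)) in E by field.
rewrite cos_2a_sin in E. nra.
Qed.
End StdR.

From HB Require Import structures.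
From mathcomp Require Import all_boot all_order all_algebra complex Rstruct ring lra zify.
Set Implicit Arguments. Unset Strict Implicit. Unset Printing Implicit Defensive.
Import GRing.Theory Num.Theory.

Local Open Scope ring_scope.

Section Omega.
Variable p : nat.
Hypothesis pP : prime p.

Definition th : Rdefinitions.R := Rdefinitions.Rdiv (Rdefinitions.Rmult 2 Rtrigo1.PI) (p%:R).

Lemma cis_mul (x y : Rdefinitions.R) :
  Complex (Rtrigo_def.cos x) (Rtrigo_def.sin x) * Complex (Rtrigo_def.cos y) (Rtrigo_def.sin y)
  = Complex (Rtrigo_def.cos (Rplus x y)) (Rtrigo_def.sin (Rplus x y)) :> Cx.
Proof.
rewrite Cos_plus.cos_plus Rtrigo1.sin_plus /GRing.mul /=.
congr Complex; rewrite ?RealsE; ring.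
Qed.

Lemma omega_pow k : omega p ^+ k =
  Complex (Rtrigo_def.cos (Rmult (INR k) th)) (Rtrigo_def.sin (Rmult (INR k) th)).
Proof.
elim: k => [|k IH].
  by rewrite expr0 Rmult_0_l Rtrigo_def.cos_0 Rtrigo_def.sin_0.
rewrite exprSr IH cis_mul; congr Complex; f_equal; rewrite S_INR /th ?RealsE /=; ring.
Qed.

Lemma p_neq0R : (p%:R : Rdefinitions.R) != 0.
Proof. by rewrite pnatr_eq0 -lt0n prime_gt0. Qed.

Lemma omega_p : omega p ^+ p = 1.
Proof.
rewrite omega_pow.
have -> : Rmult (INR p) th = Rmult 2 Rtrigo1.PI.
  rewrite /th INRE ?RealsE /=; field; exact: p_neq0R.
by rewrite Rtrigo1.cos_2PI Rtrigo1.sin_2PI.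
Qed.

Lemma omega_neq1 k : (0 < k < p)%N -> omega p ^+ k != 1.
Proof.
move=> /andP[k0 kp]; rewrite omega_pow; apply/negP => /eqP[E _].
apply: (@cos_neq1 (Rmult (INR k) th)); last exact: E.
have pr : (0 < p%:R :> Rdefinitions.R) by rewrite ltr0n prime_gt0.
have kr : (0 < k%:R :> Rdefinitions.R) by rewrite ltr0n.
have kpr : (k%:R < p%:R :> Rdefinitions.R) by rewrite ltr_nat.
have PIp : (0 < Rtrigo1.PI :> Rdefinitions.R) by apply/RltP; exact: Rtrigo1.PI_RGT_0.
split; apply/RltP; rewrite /th INRE ?RealsE /=.
  by apply: mulr_gt0 => //; apply: divr_gt0 => //; apply: mulr_gt0.
rewrite mulrA ltr_pdivrMr // [k%:R * _]mulrC ltr_pM2l //.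
by apply: mulr_gt0.
Qed.

Lemma omega_norm : `|omega p| = 1.
Proof.
apply/eqP; rewrite -(pexpr_eq1 (n := p)) ?prime_gt0 //.
by rewrite -normrX omega_p normr1.
Qed.

Lemma omega_conj k : (omega p ^+ k)^* * omega p ^+ k = 1.
Proof. by rewrite mulrC -normCK normrX omega_norm !expr1n. Qed.

End Omega.

Section Chi.
Variable p : nat.
Hypothesis pP : prime p.

Definition chi (s : 'F_p) : Cx := omega p ^+ (nat_of_ord s).

Lemma omega_mod k : omega p ^+ (k %% p) = omega p ^+ k.
Proof.
by rewrite {2}(divn_eq k p) exprD mulnC exprM omega_p // expr1n mul1r.
Qed.

Lemma chiD s t : chi (s + t) = chi s * chi t.
Proof.
rewrite /chi -exprD -[in RHS]omega_mod.
have -> : nat_of_ord (s + t) = ((s + t) %% (Zp_trunc (pdiv p)).+2)%N by [].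
by rewrite [X in (_ %% X)%N](Fp_cast pP).
Qed.

Lemma chi0 : chi 0 = 1.
Proof. by rewrite /chi expr0. Qed.

Lemma chi_eq1 s : chi s = 1 -> s = 0.
Proof.
move=> E; apply/eqP; apply: contraT => sn0.
have : omega p ^+ s != 1.
  apply: omega_neq1 => //; rewrite lt0n.
  have -> : (nat_of_ord s != 0)%N = (s != 0) by [].
  rewrite sn0 /=.
  by have := ltn_ord s; rewrite [X in (_ < X)%N -> _](Fp_cast pP).
by rewrite -/(chi s) E eqxx.
Qed.

Lemma conj_chi s t : (chi s)^* * chi t = chi (t - s).
Proof.
have -> : chi t = chi (t - s) * chi s by rewrite -chiD subrK.
by rewrite mulrCA {2 3}/chi (omega_conj pP) mulr1.
Qed.
End Chi.

Section CSS.
Variables (p n : nat).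
Hypothesis pP : prime p.

Definition dot (b x : Basis p n) : 'F_p := \sum_(i < n) b i * x i.

Lemma dotDr b x y : dot b (x + y) = dot b x + dot b y.
Proof. by rewrite /dot -big_split /=; apply: eq_bigr => i _; rewrite ffunE mulrDr. Qed.

Lemma dotBl b c x : dot (b - c) x = dot b x - dot c x.
Proof.
rewrite /dot -sumrB; apply: eq_bigr => i _.
by rewrite !ffunE mulrBl.
Qed.

Lemma dot0l x : dot 0 x = 0.
Proof. by rewrite /dot big1 // => i _; rewrite ffunE mul0r. Qed.

Lemma wtB (a b : Basis p n) : leq (wt (a - b)) (addn (wt a) (wt b)).
Proof.
rewrite /wt; apply: leq_trans (leq_card_setU _ _).
apply: subset_leq_card; apply/subsetP => i; rewrite !inE ffunE.
rewrite !ffunE; apply: contraR; rewrite negb_or !negbK => /andP[/eqP-> /eqP->]; by rewrite oppr0 addr0.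
Qed.

Lemma EopE a b (v : Hspace p n) x :
  Eop a b v x = chi (dot b (x - a)) * v (x - a).
Proof. by rewrite /Eop /Xop /Zop !ffunE. Qed.

Variables (C D : {set Basis p n}).
Hypothesis CB : forall x y, x \in C -> y \in C -> x - y \in C.
Hypothesis DB : forall x y, x \in D -> y \in D -> x - y \in D.
Hypothesis DD : forall x y, x \in D -> y \in D -> x + y \in D.
Variables tx tz : nat.
Hypothesis HX : forall a, a \in C -> (wt a <= tx + tx)%N -> a = 0.
Hypothesis HZ : forall b, (wt b <= tz + tz)%N -> (forall d, d \in D -> dot b d = 0) -> b = 0.

Definition good (u : Hspace p n) :=
  (forall x, x \notin C -> u x = 0) /\ (forall x d, d \in D -> u (x + d) = u x).

Lemma KL a1 b1 a2 b2 :
  (wt a1 <= tx)%N -> (wt a2 <= tx)%N -> (wt b1 <= tz)%N -> (wt b2 <= tz)%N ->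
  exists c : Cx, forall u v, good u -> good v ->
    inner (Eop a1 b1 u) (Eop a2 b2 v) = c * inner u v.
Proof.
move=> wa1 wa2 wb1 wb2.
have [a12|a12] := eqVneq a1 a2; last first.
  exists 0 => u v [uC uD] [vC vD]; rewrite mul0r /inner big1 // => x _.
  rewrite !EopE.
  have [ux|ux] := eqVneq (u (x - a1)) 0; first by rewrite ux mulr0 rmorph0 mul0r.
  have [vx|vx] := eqVneq (v (x - a2)) 0; first by rewrite vx !mulr0.
  have xC1 : x - a1 \in C by apply: contraT => /uC /eqP; rewrite (negPf ux).
  have xC2 : x - a2 \in C by apply: contraT => /vC /eqP; rewrite (negPf vx).
  have := CB xC1 xC2; rewrite opprB addrC addrA subrK => aC.
  have := HX aC; rewrite (leq_trans (wtB _ _)) ?leq_add //.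
  by move=> /(_ isT)/eqP; rewrite subr_eq0 eq_sym (negPf a12).
subst a2.
set b := b2 - b1.
have key : forall u v : Hspace p n,
    inner (Eop a1 b1 u) (Eop a1 b2 v) = \sum_y chi (dot b y) * ((u y)^* * v y).
  move=> u v; rewrite /inner (reindex_inj (addIr a1)) /=.
  apply: eq_bigr => y _; rewrite !EopE addrK rmorphM /=.
  by rewrite mulrACA conj_chi // dotBl.
have [b0|bn0] := eqVneq b 0.
  exists 1 => u v _ _; rewrite key mul1r /inner; apply: eq_bigr => y _.
  by rewrite b0 dot0l chi0 mul1r.
have [d dD bd] : exists2 d, d \in D & dot b d != 0.
  apply/exists_inP; apply: contraT; rewrite negb_exists_in => /forall_inP H.
  have : b = 0.
    apply: HZ; first by rewrite (leq_trans (wtB _ _)) // addnC leq_add.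
    by move=> d /H /negPn /eqP.
  by move/eqP; rewrite (negPf bn0).
exists 0 => u v [uC uD] [vC vD]; rewrite key mul0r.
set S := \sum_y _.
have : S = chi (dot b d) * S.
  rewrite {1}/S (reindex_inj (addIr d)) /= mulr_sumr; apply: eq_bigr => y _.
  by rewrite uD // vD // dotDr chiD // [chi _ * chi _]mulrC -mulrA.
move/eqP; rewrite -subr_eq0 -{1}[S]mul1r -mulrBl mulf_eq0 => /orP[|/eqP //].
rewrite subr_eq0 => /eqP/esym/(chi_eq1 pP) E.
by move: bd; rewrite E eqxx.
Qed.
End CSS.

Section Comb.
Variables (p m : nat).
Hypothesis pP : prime p.
Hypothesis podd : odd p.
Local Notation F := 'F_p.
Local Notation T := {set 'I_m}.

Definition sgn (X : T) : F := (-1) ^+ #|X|.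

Lemma sgn_sq X : sgn X * sgn X = 1.
Proof. by rewrite /sgn -exprD addnn -mul2n exprM sqrrN !expr1n. Qed.

Lemma sgn_neq0 X : sgn X != 0.
Proof.
apply/eqP => E; have := sgn_sq X; rewrite E mul0r => /eqP.
by rewrite eq_sym oner_eq0.
Qed.

Lemma two_neq0 : (2%:R : F) != 0.
Proof.
rewrite -(dvdn_pcharf (pchar_Fp pP)); apply/negP => /(dvdn_leq (isT : (0 < 2)%N)).
rewrite leq_eqVlt ltnS => /orP[/eqP p2|]; first by move: podd; rewrite p2.
by rewrite leqNgt prime_gt1.
Qed.

Lemma double_eq0 (x : F) : x = - x -> x = 0.
Proof.
move/eqP; rewrite -subr_eq0 opprK -mulr2n -mulr_natr mulf_eq0 (negPf two_neq0) orbF.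
by move/eqP.
Qed.

Lemma sum_sgn (Z X : T) :
  \sum_(S : T | (Z \subset S) && (S \subset X)) sgn S = if Z == X then sgn X else 0.
Proof.
have [->|ZX] := eqVneq Z X.
  by rewrite (big_pred1 X) // => S /=; rewrite eq_sym eqEsubset andbC.
have [sZX|nZX] := boolP (Z \subset X); last first.
  rewrite big_pred0 // => S; apply/negP => /andP[h1 h2]; move/negP: nZX; apply.
  exact: subset_trans h1 h2.
have [i iX iZ] : exists2 i, i \in X & i \notin Z.
  have : Z \proper X by rewrite properEneq ZX.
  by case/properP.
pose h (S : T) := if i \in S then S :\ i else i |: S.
have hK : involutive h.
  move=> S; rewrite /h; case: (boolP (i \in S)) => iS.
    by rewrite setD11 setD1K.
  by rewrite setU11 setU1K.
have hsgn S : sgn (h S) = - sgn S.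
  rewrite /h /sgn; case: (boolP (i \in S)) => iS.
    by rewrite [in RHS](cardsD1 i S) iS add1n exprS mulN1r opprK.
  by rewrite cardsU1 iS add1n exprS mulN1r.
have hP S : (Z \subset h S) && (h S \subset X) = (Z \subset S) && (S \subset X).
  rewrite /h; case: (boolP (i \in S)) => iS.
    rewrite subsetD1 iZ andbT; congr (_ && _).
    apply/idP/idP => H; last exact: subset_trans (subD1set _ _) H.
    by rewrite -(setD1K iS) subUset sub1set iX.
  rewrite subUset sub1set iX /=.
  apply/idP/idP => [/andP[h1 h2]|/andP[h1 h2]].
    rewrite h2 andbT; apply/subsetP => x xZ.
    have := subsetP h1 x xZ; rewrite in_setU1 => /orP[/eqP xi|//].
    by rewrite -xi xZ in iZ.
  by rewrite h2 andbT; apply: subset_trans h1 (subsetU1 _ _).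
apply: double_eq0.
rewrite {1}(reindex_inj (can_inj hK)) /=.
rewrite -sumrN; apply: eq_big => S; first by rewrite hP.
by move=> _; rewrite hsgn.
Qed.

Definition fsum (c : T -> F) (X : T) : F := \sum_(S : T | S \subset X) c S.
Definition mob (g : T -> F) (S : T) : F := sgn S * \sum_(Z : T | Z \subset S) sgn Z * g Z.

Lemma mobK g X : fsum (mob g) X = g X.
Proof.
rewrite /fsum /mob.
under eq_bigr => S _ do rewrite big_distrr /=.
rewrite (exchange_big_dep predT) //=.
rewrite (bigD1 X) //= [X in _ + X]big1 ?addr0.
  rewrite -big_distrl /=.
  under eq_bigl => S do rewrite andbC.
  by rewrite sum_sgn eqxx mulrA sgn_sq mul1r.
move=> Z ZX; rewrite -big_distrl /=.
under eq_bigl => S do rewrite andbC.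
by rewrite sum_sgn (negPf ZX) mul0r.
Qed.

Lemma sum_supsets (U : T) :
  \sum_(X : T | U \subset X) sgn X = if U == setT then sgn setT else 0.
Proof.
rewrite -sum_sgn; apply: eq_bigl => X; by rewrite subsetT andbT.
Qed.

Lemma exists_max (c : T -> F) S1 : c S1 != 0 ->
  exists S0, c S0 != 0 /\ (forall S : T, S0 \proper S -> c S = 0).
Proof.
move=> cS1.
case: (@arg_maxnP _ S1 (fun S => c S != 0) (fun S => #|S|) cS1) => S0 cS0 Hmax.
exists S0; split => // S pS; apply/eqP; apply: contraT => cS.
have : (#|S| <= #|S0|)%N := Hmax S cS. by rewrite leqNgt (proper_card pS).
Qed.

Lemma L1 (c : T -> F) S0 : c S0 != 0 -> (forall S : T, S0 \proper S -> c S = 0) ->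
  leq (expn 2 (subn m #|S0|)) #|[set X | fsum c X != 0]|.
Proof.
move=> cS0 Hmax.
have key : forall W : T, W \subset ~: S0 ->
    \sum_(Z : T | Z \subset S0) sgn Z * fsum c (Z :|: W) = sgn S0 * c S0.
  move=> W WS0; rewrite /fsum.
  under eq_bigr => Z _ do rewrite big_distrr /=.
  rewrite (exchange_big_dep predT) //=.
  under eq_bigr => S _ do rewrite -big_distrl /=.
  rewrite (bigD1 S0) //= [X in _ + X]big1 ?addr0.
    under eq_bigl => Z do rewrite setUC -subDset andbC.
    have -> : S0 :\: W = S0.
      by apply/setDidPl; rewrite disjoint_sym disjoints_subset.
    by rewrite sum_sgn eqxx.
  move=> S SS0.
  under eq_bigl => Z do rewrite setUC -subDset andbC.
  rewrite sum_sgn; case: eqP => [E|_]; last by rewrite mul0r.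
  rewrite Hmax ?mulr0 // properEneq eq_sym SS0 -E subsetDl.
  done.
have ex : forall W : T, W \subset ~: S0 ->
    exists Z : T, (Z \subset S0) && (fsum c (Z :|: W) != 0).
  move=> W WS0; apply/existsP; apply: contraT; rewrite negb_exists => /forallP H.
  have := key W WS0; rewrite big1.
    by move/eqP; rewrite eq_sym mulf_eq0 (negPf (sgn_neq0 _)) (negPf cS0).
  move=> Z ZS0; have := H Z; rewrite ZS0 /= negbK => /eqP ->; exact: mulr0.
pose g (W : T) := odflt set0 [pick Z : T | (Z \subset S0) && (fsum c (Z :|: W) != 0)] :|: W.
have gP : forall W : T, W \subset ~: S0 ->
    (g W \in [set X | fsum c X != 0]) /\ g W :&: ~: S0 = W.
  move=> W WS0; rewrite /g; case: pickP => [Z /andP[ZS0 fZ]|H] /=.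
    split; first by rewrite inE.
    rewrite setIUl; have -> : Z :&: ~: S0 = set0.
      by apply/eqP; rewrite -setDE setD_eq0.
    by rewrite set0U; apply/setIidPl.
  by have [Z HZ] := ex W WS0; rewrite H in HZ.
have cardC : #|~: S0| = (m - #|S0|)%N.
  by have := cardsC S0; rewrite card_ord; lia.
rewrite -cardC -card_powerset.
rewrite -(@card_in_imset _ _ g).
  apply: subset_leq_card; apply/subsetP => X /imsetP[W].
  move=> WS0 ->; rewrite powersetE in WS0; exact: (gP W WS0).1.
move=> W1 W2; rewrite !powersetE => H1 H2 E.
by rewrite -(gP W1 H1).2 -(gP W2 H2).2 E.
Qed.

Lemma LB (r : nat) (b : T -> F) :
  (forall U : T, (r < #|U|)%N -> \sum_(S : T | U \subset S) b S = 0) ->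
  forall U : T, (r < #|U|)%N -> b U = 0.
Proof.
move=> H.
suff : forall k (U : T), (m - #|U| < k)%N -> (r < #|U|)%N -> b U = 0.
  by move=> K U; apply: (K (m - #|U|).+1).
elim=> [//|k IH] U Uk rU.
have := H U rU; rewrite (bigD1 U) //= big1 ?addr0 // => S /andP[US SU].
have pUS : U \proper S by rewrite properEneq eq_sym SU.
have := proper_card pUS; have := max_card S; rewrite card_ord => h1 h2.
apply: IH; lia.
Qed.
End Comb.

Section Codes.
Variables (m r1 r2 p t : nat).
Hypotheses (r12 : (r1 < r2)%N) (r2m : (r2 <= m)%N) (pP : prime p) (podd : odd p).
Local Notation F := 'F_p.
Local Notation I := {set 'I_m}.
Local Notation J := ('I_t * {set 'I_m})%type.
Local Notation n := (t * 2 ^ m)%N.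

Lemma cardI : #|{: I}| = (2 ^ m)%N.
Proof. by rewrite -cardsT -powersetT card_powerset cardsT card_ord. Qed.

Lemma cardJ : #|{: J}| = n.
Proof. by rewrite card_prod card_ord cardI. Qed.

Definition phi (i : 'I_n) : J := enum_val (cast_ord (esym cardJ) i).
Definition phinv (j : J) : 'I_n := cast_ord cardJ (enum_rank j).
Lemma phiK : cancel phi phinv.
Proof. by move=> i; rewrite /phi /phinv enum_valK cast_ordKV. Qed.
Lemma phinvK : cancel phinv phi.
Proof. by move=> j; rewrite /phi /phinv cast_ordK enum_rankK. Qed.

Definition Fj (c : {ffun J -> F}) (j : J) : F :=
  sgn p j.2 * fsum (fun S => c (j.1, S)) j.2.
Definition enc (c : {ffun J -> F}) : Basis p n := [ffun i => Fj c (phi i)].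
Definition degOK (r : nat) (c : {ffun J -> F}) : bool :=
  [forall j : J, (c j != 0) ==> (#|j.2| + r < m)%N].
Definition Cset : {set Basis p n} := [set x | [exists c, degOK r1 c && (x == enc c)]].
Definition Dset : {set Basis p n} := [set x | [exists c, degOK r2 c && (x == enc c)]].

Lemma encD c1 c2 : enc (c1 + c2) = enc c1 + enc c2.
Proof.
apply/ffunP => i; rewrite !ffunE /Fj /fsum -mulrDr -big_split /=.
by congr (_ * _); apply: eq_bigr => S _; rewrite ffunE.
Qed.
Lemma encN c : enc (- c) = - enc c.
Proof.
apply/ffunP => i; rewrite !ffunE /Fj /fsum -mulrN -sumrN /=.
by congr (_ * _); apply: eq_bigr => S _; rewrite ffunE.
Qed.
Lemma encB c1 c2 : enc (c1 - c2) = enc c1 - enc c2.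
Proof. by rewrite encD encN. Qed.
Lemma enc0 : enc 0 = 0.
Proof. by have := encB 0 0; rewrite subrr => ->; rewrite subrr. Qed.

Lemma degOKD r c1 c2 : degOK r c1 -> degOK r c2 -> degOK r (c1 + c2).
Proof.
move=> /forallP H1 /forallP H2; apply/forallP => j; rewrite ffunE.
apply/implyP => h; have [z1|nz1] := eqVneq (c1 j) 0.
  by move: h; rewrite z1 add0r => h; exact: (implyP (H2 j) h).
exact: (implyP (H1 j) nz1).
Qed.
Lemma degOKN r c : degOK r c -> degOK r (- c).
Proof.
move=> /forallP H; apply/forallP => j; rewrite ffunE oppr_eq0; exact: H.
Qed.
Lemma degOK12 c : degOK r2 c -> degOK r1 c.
Proof.
move=> /forallP H; apply/forallP => j; apply/implyP => /(implyP (H j)).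
move=> h; apply: leq_ltn_trans h; rewrite leq_add2l; exact: ltnW.
Qed.

Lemma CB x y : x \in Cset -> y \in Cset -> x - y \in Cset.
Proof.
rewrite !inE => /exists_inP[c1 d1 /eqP->] /exists_inP[c2 d2 /eqP->].
apply/exists_inP; exists (c1 - c2); first by apply: degOKD => //; exact: degOKN.
by rewrite encB.
Qed.
Lemma CD x y : x \in Cset -> y \in Cset -> x + y \in Cset.
Proof.
rewrite !inE => /exists_inP[c1 d1 /eqP->] /exists_inP[c2 d2 /eqP->].
apply/exists_inP; exists (c1 + c2); first exact: degOKD.
by rewrite encD.
Qed.
Lemma DB x y : x \in Dset -> y \in Dset -> x - y \in Dset.
Proof.
rewrite !inE => /exists_inP[c1 d1 /eqP->] /exists_inP[c2 d2 /eqP->].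
apply/exists_inP; exists (c1 - c2); first by apply: degOKD => //; exact: degOKN.
by rewrite encB.
Qed.
Lemma DD x y : x \in Dset -> y \in Dset -> x + y \in Dset.
Proof.
rewrite !inE => /exists_inP[c1 d1 /eqP->] /exists_inP[c2 d2 /eqP->].
apply/exists_inP; exists (c1 + c2); first exact: degOKD.
by rewrite encD.
Qed.
Lemma DC x : x \in Dset -> x \in Cset.
Proof.
rewrite !inE => /exists_inP[c d /eqP->]; apply/exists_inP; exists c => //.
exact: degOK12.
Qed.
Lemma D0 : 0 \in Dset.
Proof.
rewrite inE; apply/exists_inP; exists 0; last by rewrite enc0.
by apply/forallP => j; rewrite ffunE eqxx.
Qed.

Lemma wt_block (b : Basis p n) j1 :
  leq #|[set X : I | b (phinv (j1, X)) != 0]| (wt b).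
Proof.
rewrite /wt -(@card_imset _ _ (fun X => phinv (j1, X))); last first.
  by move=> X1 X2 /(can_inj phinvK) [].
apply: subset_leq_card; apply/subsetP => i /imsetP[X]; rewrite !inE => h ->.
exact: h.
Qed.

Lemma enc_phinv c j : enc c (phinv j) = Fj c j.
Proof. by rewrite ffunE phinvK. Qed.

Lemma wt_enc (c : {ffun J -> F}) : c != 0 -> exists j1 S0, c (j1, S0) != 0 /\
  leq (expn 2 (subn m #|S0|)) (wt (enc c)).
Proof.
move=> cn0.
have [[j1 S1] cS1] : exists j, c j != 0.
  apply/existsP; apply: contraT; rewrite negb_exists => /forallP H.
  have c0 : c = 0.
    apply/ffunP => j; rewrite ffunE; apply/eqP.
    by have := H j; rewrite negbK.
  by rewrite c0 eqxx in cn0.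
have [S0 [cS0 Hmax]] := @exists_max p m (fun S => c (j1, S)) S1 cS1.
exists j1, S0; split => //.
apply: leq_trans (wt_block _ j1).
apply: leq_trans (L1 pP podd cS0 Hmax) _.
apply: subset_leq_card; apply/subsetP => X; rewrite !inE enc_phinv /Fj /=.
by move=> h; rewrite mulf_neq0 // sgn_neq0.
Qed.

Lemma enc_eq0 (c : {ffun J -> F}) : enc c = 0 -> c = 0.
Proof.
move=> E; apply/eqP; apply: contraT => cn0.
have [j1 [S0 [_ h]]] := wt_enc cn0.
move: h; rewrite E.
have -> : wt (0 : Basis p n) = 0%N.
  by rewrite /wt; apply/eqP; rewrite cards_eq0; apply/eqP/setP => i; rewrite !inE ffunE eqxx.
by rewrite leqn0 expn_eq0.
Qed.

Lemma HX a : a \in Cset -> (wt a < 2 ^ r1.+1)%N -> a = 0.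
Proof.
rewrite inE => /exists_inP[c dc /eqP->] wa.
have [->|cn0] := eqVneq c 0; first exact: enc0.
have [j1 [S0 [cS0 h]]] := wt_enc cn0.
have deg : (#|S0| + r1 < m)%N := implyP (forallP dc (j1, S0)) cS0.
have : (2 ^ r1.+1 <= 2 ^ (m - #|S0|))%N by rewrite leq_pexp2l //; lia.
by move=> h2; have := leq_trans h2 h; rewrite leqNgt wa.
Qed.

Lemma setU_compl (S U : I) : (S :|: ~: U == setT) = (U \subset S).
Proof.
apply/eqP/idP => [E|US].
  apply/subsetP => x xU; have : x \in S :|: ~: U by rewrite E inE.
  by rewrite !inE xU orbF.
apply/setP => x; rewrite !inE; case: (boolP (x \in U)) => xU /=.
  by rewrite (subsetP US).
by rewrite orbT.
Qed.

Lemma sum_ind (X T0 : I) :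
  \sum_(S : I | S \subset X) (if S == T0 then (1 : F) else 0) =
  if T0 \subset X then 1 else 0.
Proof.
rewrite -big_mkcondr /=; case: (boolP (T0 \subset X)) => h.
  rewrite (big_pred1 T0) // => S /=; apply/andP/eqP => [[_ /eqP //]|->].
  by split.
rewrite big_pred0 // => S; apply/andP => -[SX /eqP E]; by rewrite -E SX in h.
Qed.

Definition delta (j0 : J) : {ffun J -> F} := [ffun j => if j == j0 then 1 else 0].

Lemma dot_delta (b : Basis p n) j1 T0 :
  dot b (enc (delta (j1, T0))) =
  \sum_(X : I | T0 \subset X) b (phinv (j1, X)) * sgn p X.
Proof.
rewrite /dot (reindex phinv (onW_bij _ (Bijective phinvK phiK))) /=.
have -> : \sum_(j : J) b (phinv j) * enc (delta (j1, T0)) (phinv j) =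
   \sum_(a : 'I_t) \sum_(X : I) b (phinv (a, X)) * Fj (delta (j1, T0)) (a, X).
  rewrite pair_bigA /=; apply: congr_big => // -[a X] _; by rewrite enc_phinv.
rewrite (bigD1 j1) //= [X in _ + X]big1 ?addr0; last first.
  move=> a aj; apply: big1 => X _; rewrite /Fj /fsum big1 ?mulr0 //.
  by move=> S _; rewrite ffunE xpair_eqE (negPf aj).
rewrite [RHS]big_mkcond /=; apply: eq_bigr => X _.
rewrite /Fj /fsum /=.
under eq_bigr => S _ do rewrite ffunE xpair_eqE eqxx /=.
rewrite sum_ind; case: ifP => _; first by rewrite mulr1 mulrC.
by rewrite !mulr0.
Qed.

Lemma HZ (b : Basis p n) : (wt b < 2 ^ (m - r2))%N ->
  (forall d, d \in Dset -> dot b d = 0) -> b = 0.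
Proof.
move=> wb Hd.
suff H0 : forall j1 X, b (phinv (j1, X)) = 0.
  apply/ffunP => i; rewrite ffunE -(phiK i); case: (phi i) => j1 X; exact: H0.
move=> j1.
pose g (X : I) := b (phinv (j1, X)).
pose be := mob g.
have Hsum : forall U : I, (r2 < #|U|)%N -> \sum_(S : I | U \subset S) be S = 0.
  move=> U rU.
  have dD : enc (delta (j1, ~: U)) \in Dset.
    rewrite inE; apply/exists_inP; exists (delta (j1, ~: U)) => //.
    apply/forallP => j; rewrite ffunE; apply/implyP; case: (eqVneq j (j1, ~: U)) => [-> _|//] /=.
    have hc : (#|U| + #|~: U| = m)%N by rewrite cardsC card_ord.
    apply: (@leq_trans (#|~: U| + #|U|)); first by rewrite ltn_add2l.
    by rewrite addnC hc.
  have := Hd _ dD; rewrite dot_delta.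
  have -> : \sum_(X : I | ~: U \subset X) b (phinv (j1, X)) * sgn p X =
      \sum_(X : I | ~: U \subset X) sgn p X * \sum_(S : I | S \subset X) be S.
    by apply: eq_bigr => X _; rewrite mulrC; congr (_ * _); exact: (esym (mobK pP podd g X)).
  under eq_bigr => X _ do rewrite big_distrr /=.
  rewrite (exchange_big_dep predT) //=.
  under eq_bigr => S _ do rewrite -big_distrl /=.
  have E : forall Y : {set 'I_m}, \sum_(X : {set 'I_m} | (~: U \subset X) && (Y \subset X)) sgn p X =
      if U \subset Y then sgn p [set: 'I_m] else 0.
    move=> Y; rewrite -[U \subset Y]setU_compl -(sum_supsets pP podd); apply: eq_bigl => X.
    by rewrite subUset andbC.
  under eq_bigr => S _ do rewrite E.
  have -> : \sum_(S : I) (if U \subset S then sgn p [set: 'I_m] else 0) * be S =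
      sgn p [set: 'I_m] * \sum_(S : I | U \subset S) be S.
    rewrite big_distrr [RHS]big_mkcond; apply: eq_bigr => S _.
    by case: ifP => _; rewrite ?mul0r ?mulr0.
  by move/eqP; rewrite mulf_eq0 (negPf (sgn_neq0 _ _)) => /eqP.
have bz := LB pP podd Hsum.
case: (boolP [exists S1 : {set 'I_m}, be S1 != 0]) => [/existsP [S1 bS1]|b0].
  have [S0 [bS0 Hmax]] := @exists_max p m be S1 bS1.
  have S0r : (#|S0| <= r2)%N.
    by rewrite leqNgt; apply: contra bS0 => /bz ->.
  have := L1 pP podd bS0 Hmax.
  have -> : [set X | fsum be X != 0] = [set X : I | b (phinv (j1, X)) != 0].
    by apply/setP => X; rewrite !inE /be (mobK pP podd).
  move/leq_trans => /(_ _ (wt_block b j1)) h.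
  have : (2 ^ (m - r2) <= 2 ^ (m - #|S0|))%N by rewrite leq_pexp2l // leq_sub2l.
  move/leq_trans => /(_ _ h); by rewrite leqNgt wb.
move=> X; rewrite -/(g X) -(mobK pP podd g X) /fsum big1 // => S _.
by apply/eqP; move: b0; rewrite negb_exists => /forallP /(_ S); rewrite negbK.
Qed.
End Codes.

Section QCode.
Variables (m r1 r2 p t : nat).
Hypotheses (r12 : (r1 < r2)%N) (r2m : (r2 <= m)%N) (pP : prime p) (podd : odd p).
Local Notation F := 'F_p.
Local Notation J := ('I_t * {set 'I_m})%type.
Local Notation n := (t * 2 ^ m)%N.
Local Notation enc := (@enc m p t).
Local Notation Cset := (@Cset m r1 p t).
Local Notation Dset := (@Dset m r2 p t).

Definition Rset : {set J} := [set j : J | (m <= #|j.2| + r2)%N && (#|j.2| + r1 < m)%N].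
Definition Rt := {j : J | j \in Rset}.

Definition ext (g : {ffun Rt -> F}) : {ffun J -> F} :=
  [ffun j => if insub j is Some r then g r else 0].
Definition psi g := enc (ext g).

Lemma ext_val g (r : Rt) : ext g (val r) = g r.
Proof. by rewrite ffunE valK. Qed.

Lemma psiC g : psi g \in Cset.
Proof.
rewrite inE; apply/exists_inP; exists (ext g) => //.
apply/forallP => j; rewrite ffunE; apply/implyP.
case: insubP => [r jR _ _|//]; by move: jR; rewrite inE => /andP[].
Qed.

Lemma psi_inj g1 g2 : psi g1 - psi g2 \in Dset -> g1 = g2.
Proof.
rewrite inE => /exists_inP[c dc /eqP E].
have : enc (ext g1 - ext g2 - c) = 0 by rewrite !encB -E subrr.
move/(enc_eq0 pP podd) => E2.
apply/ffunP => r; apply/eqP; rewrite -subr_eq0.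
move/ffunP: E2 => /(_ (val r)); rewrite !ffunE /=.
have -> : insub (sval r) = Some r := valK r.
have -> : c (val r) = 0.
  apply/eqP; apply: contraT => /(implyP (forallP dc (val r))).
  have := valP r; rewrite inE => /andP[h1 _] h2.
  by move: (leq_trans h2 h1); rewrite ltnn.
by rewrite subr0 => ->.
Qed.

Definition ind (y : Basis p n) : Hspace p n :=
  [ffun x : Basis p n => if x - y \in Dset then (1 : Cx) else 0].
Definition vecs := [seq ind (psi g) | g <- enum {ffun Rt -> F}].
Definition Qsp : {vspace Hspace p n} := <<vecs>>%VS.

Lemma good_vecs w : w \in vecs -> good Cset Dset w.
Proof.
case/mapP => g _ ->; split.
  move=> x xC; rewrite ffunE; case: ifP => // xD.
  have : x - psi g + psi g \in Cset by apply: CD; [exact: (DC r12) | exact: psiC].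
  by rewrite subrK (negPf xC).
move=> x d dD; rewrite !ffunE.
have -> : x + d - psi g = (x - psi g) + d by rewrite addrAC.
congr (if _ then _ else _); apply/idP/idP => h.
  by have := DB h dD; rewrite addrK.
exact: DD.
Qed.

Lemma good_lin N (s : N.-tuple (Hspace p n)) (k : 'I_N -> Cx) :
  (forall w, w \in s -> good Cset Dset w) ->
  good Cset Dset (\sum_(i < N) k i *: s`_i).
Proof.
move=> H.
have Hi : forall i : 'I_N, good Cset Dset s`_i.
  move=> i; apply: H; apply: mem_nth; by rewrite size_tuple.
split.
  move=> x xC; rewrite sum_ffunE big1 // => i _; rewrite ffunE.
  by rewrite ((Hi i).1 x xC) scaler0.
move=> x d dD; rewrite !sum_ffunE; apply: eq_bigr => i _; rewrite !ffunE.
by rewrite ((Hi i).2 x d dD).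
Qed.

Lemma good_Q u : u \in Qsp -> good Cset Dset u.
Proof.
move=> uQ; rewrite (coord_span uQ); apply: good_lin => w; exact: good_vecs.
Qed.

Lemma free_vecs : free vecs.
Proof.
apply/freeP => k Hk i.
have si : (i < size (enum {ffun Rt -> F}))%N by rewrite -cardE; exact: ltn_ord.
set gi := nth 0 (enum {ffun Rt -> F}) i.
move/ffunP: Hk => /(_ (psi gi)); rewrite sum_ffunE ffunE (bigD1 i) //= big1.
  rewrite addr0 ffunE (nth_map 0) // ffunE -/gi subrr D0.
  by move=> E; rewrite -[k i]mulr1; exact: E.
move=> j ji; rewrite ffunE.
have sj : (j < size (enum {ffun Rt -> F}))%N by rewrite -cardE; exact: ltn_ord.
rewrite (nth_map 0) // ffunE; case: ifP => h; last by rewrite scaler0.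
have := psi_inj h => /eqP; rewrite /gi nth_uniq ?enum_uniq // => /eqP E.
by move: ji; rewrite -(inj_eq val_inj) /= E eqxx.
Qed.

Lemma dimQ : \dim Qsp = (p ^ #|Rset|)%N.
Proof.
rewrite /Qsp (eqP free_vecs) size_map -cardE card_ffun card_Fp //.
by rewrite card_sig; congr (_ ^ _)%N; apply: eq_card => j; rewrite !inE.
Qed.
End QCode.

Section Count.
Variables (m r1 r2 t : nat).
Hypothesis (r12 : (r1 < r2)%N).

Lemma card_le r : #|[set U : {set 'I_m} | (#|U| <= r)%N]| = kRM m r.
Proof.
elim: r => [|r IH].
  rewrite /kRM big_nat1.
  have -> : [set U : {set 'I_m} | (#|U| <= 0)%N] = [set U : {set 'I_m} | #|U| == 0%N].
    by apply/setP => U; rewrite !inE leqn0.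
  by rewrite card_draws card_ord.
rewrite /kRM big_nat_recr //= -/(kRM m r) -IH.
have -> : [set U : {set 'I_m} | (#|U| <= r.+1)%N] =
    [set U : {set 'I_m} | (#|U| <= r)%N] :|: [set U : {set 'I_m} | #|U| == r.+1].
  by apply/setP => U; rewrite !inE leq_eqVlt ltnS orbC.
rewrite cardsU card_draws card_ord.
have -> : [set U : {set 'I_m} | (#|U| <= r)%N] :&: [set U : {set 'I_m} | #|U| == r.+1] = set0.
  apply/setP => U; rewrite !inE; apply/negP => /andP[h /eqP e].
  by rewrite e ltnn in h.
by rewrite cards0 subn0.
Qed.

Lemma card_Rb :
  #|[set S : {set 'I_m} | (m <= #|S| + r2)%N && (#|S| + r1 < m)%N]| = (kRM m r2 - kRM m r1)%N.
Proof.
set Rb := [set S : {set 'I_m} | _].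
rewrite -(card_imset _ (@setC_inj 'I_m)).
have -> : (@setC 'I_m) @: Rb = [set U : {set 'I_m} | (#|U| <= r2)%N] :\: [set U : {set 'I_m} | (#|U| <= r1)%N].
  apply/setP => U; rewrite !inE; apply/imsetP/idP.
    move=> [S]; rewrite inE => /andP[h1 h2] ->.
    have hc : (#|S| + #|~: S| = m)%N by rewrite cardsC card_ord.
    apply/andP; split; lia.
  move=> /andP[h1 h2]; exists (~: U); last by rewrite setCK.
  have hc : (#|~: U| + #|~: ~: U| = m)%N by rewrite cardsC card_ord.
  rewrite setCK in hc; rewrite inE; apply/andP; split; lia.
rewrite cardsDS ?card_le //.
apply/subsetP => U; rewrite !inE => h; apply: leq_trans h _; exact: ltnW.
Qed.
End Count.

Lemma card_Rset m r1 r2 t : (r1 < r2)%N -> #|Rset m r1 r2 t| = (t * (kRM m r2 - kRM m r1))%N.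
Proof.
move=> r12; have -> : Rset m r1 r2 t = setX [set: 'I_t]
   [set S : {set 'I_m} | (m <= #|S| + r2)%N && (#|S| + r1 < m)%N].
  by apply/setP; case=> a S; rewrite !inE.
by rewrite cardsX cardsT card_ord card_Rb.
Qed.

Lemma half2 k : (0 < k)%N -> (k.-1./2 + k.-1./2 < k)%N.
Proof.
move=> k0; rewrite addnn halfK; apply: leq_ltn_trans (leq_subr _ _) _.
by rewrite prednK.
Qed.

Theorem theorem11 (m r1 r2 p t : nat) :
  (1 <= m)%N -> (r1 < r2)%N -> (r2 <= m)%N ->
  prime p -> odd p -> (1 <= t)%N ->
  exists (dz dx : nat) (Q : {vspace Hspace p (t * 2 ^ m)}),
    [/\ (2 ^ (m - r2) <= dz)%N, (2 ^ r1.+1 <= dx)%N &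
        AQECC (t * (kRM m r2 - kRM m r1)) dz dx Q].
Proof.
move=> m1 r12 r2m pP po t1.
exists (2 ^ (m - r2))%N, (2 ^ r1.+1)%N, (Qsp m r1 r2 p t).
split => //; split.
  by rewrite dimQ // card_Rset.
move=> a1 b1 a2 b2 wa1 wa2 wb1 wb2.
have HX' : forall a, a \in Cset m r1 p t -> (wt a <= (2 ^ r1.+1).-1./2 + (2 ^ r1.+1).-1./2)%N -> a = 0.
  move=> a aC wa; apply: (HX r12 r2m pP po aC); apply: leq_ltn_trans wa _.
  by apply: half2; rewrite expn_gt0.
have HZ' : forall b, (wt b <= (2 ^ (m - r2)).-1./2 + (2 ^ (m - r2)).-1./2)%N ->
    (forall d, d \in Dset m r2 p t -> dot b d = 0) -> b = 0.
  move=> b wb; apply: (HZ pP po); apply: leq_ltn_trans wb _.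
  by apply: half2; rewrite expn_gt0.
have [c Hc] := KL pP (@CB m r1 p t) HX' HZ' wa1 wa2 wb1 wb2.
by exists c => u v uQ vQ; apply: Hc; apply: (good_Q r12).
Qed.
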